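(* The family $R^{\mathrm{co}}_\lambda$, $\lambda>0$, defined by \[ R^{\mathrm{co}}_\lambda f=R^{\mathrm{du}}_\lambda f+\sum_{i\in\mathcal M}\sum_{j=1}^{\kappa(i)}u_{i,j}(f,\lambda)\,\ell^{i,j}_\lambda \] is a Feller resolvent on $C(S_{\mathrm u})$ (it satisfies the Hilbert equation, $\lambda R^{\mathrm{co}}_\lambda f\to f$ as $\lambda\to\infty$, the operators are non-negative and $\lambda R^{\mathrm{co}}_\lambda1_{S_{\mathrm u}}\le1_{S_{\mathrm u}}$). It is conservative (i.e. $\lambda R^{\mathrm{co}}_\lambda1_{S_{\mathrm u}}=1_{S_{\mathrm u}}$) if all $\mathfrak p_{i,j}$ are probability measures.
   Context: Let $S_1,\dots,S_N$ be disjoint compact metrizable separable spaces and $A_i$ generators of Feller semigroups (positive contraction semigroups, not necessarily conservative) on $C(S_i)$ with resolvents $R_{\lambda,i}=(\lambda-A_i)^{-1}$. Assume $A_1,\dots,A_M$ ($1\le M\le N$) are not conservative and $A_{M+1},\dots,A_N$ conservative. For $i\in\mathcal M=\{1,\dots,M\}$, assume the kernel of $A_i$ is trivial and there are continuous functions $\phi^{i,j}$, $j=1,\dots,\kappa(i)$, with $0\le\phi^{i,j}\le1_{S_i}$, $\lambda R_{\lambda,i}\phi^{i,j}\le\phi^{i,j}$ for all $\lambda>0$, $\lambda R_{\lambda,i}\phi^{i,j}\ne\phi^{i,j}$, and $\sum_{j=1}^{\kappa(i)}\phi^{i,j}=1_{S_i}$ (a regular Feller exit boundary with $\kappa(i)$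 exits). Let $\ell^{i,j}_\lambda=\phi^{i,j}-\lambda R_{\lambda,i}\phi^{i,j}$ (Laplace transforms of exit laws), $\mathcal{IJ}=\{(i,j):i\in\mathcal M,1\le j\le\kappa(i)\}$, $\kappa=\sum_{i\in\mathcal M}\kappa(i)$. Let $S_{\mathrm u}$ be the disjoint union of the $S_i$ (functions on $S_i$ extended by zero to $S_{\mathrm u}$; $f_i=f1_{S_i}$), $R^{\mathrm{du}}_\lambda f=\sum_{i=1}^NR_{\lambda,i}f_i$, and $\mathfrak p_{i,j}$, $(i,j)\in\mathcal{IJ}$, Borel sub-probability measures on $S_{\mathrm u}$ (distribution of the restart point after exiting $S_i$ through gate $j$). Let $N_\lambda:\mathbb R^\kappa\to\mathbb R^\kappa$, $(N_\lambda w)_{i,j}=\sum_{k\in\mathcal M}\sum_{l=1}^{\kappa(k)}w_{k,l}\int_{S_k}\ell^{k,l}_\lambda\,\mathrm d\mathfrak p_{i,j}$; then $\|N_\lambda\|<1$ and $M_\lambda=I-N_\lambda$ is invertible. For $f\in C(S_{\mathrm u})$, $u(f,\lambda)=M_\lambda^{-1}\big(\int_{S_{\mathrm u}}R^{\mathrm{du}}_\lambda f\,\mathrm d\mathfrak p_{i,j}\big)_{(i,j)\in\mathcal{IJ}}$. *)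

(* Defs.v *)
From HB Require Import structures.
From mathcomp Require Import all_boot all_order all_algebra.
From mathcomp Require Import all_classical all_reals all_analysis.
Set Implicit Arguments. Unset Strict Implicit. Unset Printing Implicit Defensive.
Import Order.TTheory GRing.Theory Num.Theory.
Import numFieldNormedType.Exports.
Local Open Scope classical_set_scope.
Local Open Scope ring_scope.

Definition Borel (T : ptopologicalType) := g_sigma_algebraType (@open T).

Section FellerDefs.
Context {R : realType} {T : pseudoPMetricType R}.

(* [feller_resolvent D Res] : the family [Res lam], lam > 0, is a Feller
   resolvent on C(D) (functions on D are represented as functions T -> R,
   only their values on D matter):
   - Res lam is an operator on C(D) (depends only on values on D, maps C(D)
     to C(D), linear),
   - Hilbert (resolvent) equation,
   - lam Res lam f -> f uniformly on D as lam -> oo,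
   - non-negativity,
   - lam Res lam 1 <= 1. *)
Definition feller_resolvent (D : set T) (Res : R -> (T -> R) -> T -> R) : Prop :=
  (forall (lam : R) (f g : T -> R), 0 < lam -> (forall x, D x -> f x = g x) ->
         forall x, D x -> Res lam f x = Res lam g x) /\
      (forall (lam : R) (f : T -> R), 0 < lam -> {within D, continuous f} ->
         {within D, continuous (Res lam f)}) /\
      (forall (lam : R) (a : R) (f g : T -> R), 0 < lam ->
         {within D, continuous f} -> {within D, continuous g} ->
         forall x, D x ->
           Res lam (fun y => a * f y + g y) x = a * Res lam f x + Res lam g x) /\
      (forall (lam mu : R) (f : T -> R), 0 < lam -> 0 < mu -> {within D, continuous f} ->
         forall x, D x ->
           Res lam f x - Res mu f x = (mu - lam) * Res lam (Res mu f) x) /\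
      (forall f : T -> R, {within D, continuous f} ->
         forall eps : R, 0 < eps -> exists L : R, forall lam : R, L < lam ->
           forall x, D x -> `|lam * Res lam f x - f x| < eps) /\
      (forall (lam : R) (f : T -> R), 0 < lam -> {within D, continuous f} ->
         (forall x, D x -> 0 <= f x) -> forall x, D x -> 0 <= Res lam f x) /\
      (forall lam : R, 0 < lam -> forall x, D x ->
         lam * Res lam (fun _ => 1) x <= 1).

Definition conservative (D : set T) (Res : R -> (T -> R) -> T -> R) : Prop :=
  forall lam : R, 0 < lam -> forall x, D x -> lam * Res lam (fun _ => 1) x = 1.

(* The generator
   is A (Res lam g) = lam Res lam g - g (independent of lam > 0), so
   ker A = 0 means: lam Res lam g = g on D forces Res lam g = 0 on D. *)
Definition trivial_kernel (D : set T) (Res : R -> (T -> R) -> T -> R) : Prop :=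
  forall (lam : R) (g : T -> R), 0 < lam -> {within D, continuous g} ->
    (forall x, D x -> lam * Res lam g x - g x = 0) ->
    forall x, D x -> Res lam g x = 0.

Section Construction.
Variables (N M : nat) (S : 'I_N -> set T)
  (Res : 'I_N -> R -> (T -> R) -> T -> R)
  (kappa : 'I_N -> nat) (phi : forall i : 'I_N, 'I_(kappa i) -> T -> R)
  (p : forall i : 'I_N, 'I_(kappa i) -> {measure set (Borel T) -> \bar R}).

(* the set IJ of pairs (i,j), i in {1..M} (0-based: i < M), 1 <= j <= kappa(i) *)
Definition IJ := {ij : {i : 'I_N & 'I_(kappa i)} | (tag ij < M)%N}.

Definition ijI (ij : IJ) : 'I_N := tag (val ij).
Definition ijJ (ij : IJ) : 'I_(kappa (ijI ij)) := tagged (val ij).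

Definition Rdu (lam : R) (f : T -> R) : T -> R :=
  fun x => \sum_(i < N) \1_(S i) x * Res i lam (fun y => \1_(S i) y * f y) x.

Definition ell (i : 'I_N) (j : 'I_(kappa i)) (lam : R) : T -> R :=
  fun x => \1_(S i) x * (phi j x - lam * Res i lam (phi j) x).

Definition Nmx (lam : R) : 'M[R]_#|{: IJ}| :=
  \matrix_(a, b)
    Rintegral (p (ijJ (enum_val a))) (S (ijI (enum_val b)))
              (ell (ijJ (enum_val b)) lam).

Definition bvec (f : T -> R) (lam : R) : 'cV[R]_#|{: IJ}| :=
  \col_a Rintegral (p (ijJ (enum_val a))) setT (Rdu lam f).

Definition u (f : T -> R) (lam : R) (ij : IJ) : R :=
  (invmx (1%:M - Nmx lam) *m bvec f lam) (enum_rank ij) ord0.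

Definition Rco (lam : R) (f : T -> R) : T -> R :=
  fun x => Rdu lam f x + \sum_(ij : IJ) u f lam ij * ell (ijJ ij) lam x.

End Construction.
End FellerDefs.

(* Main.v *)
Require Import Defs.
From HB Require Import structures.
From mathcomp Require Import all_boot all_order all_algebra.
From mathcomp Require Import all_classical all_reals all_analysis.
From mathcomp Require Import measurable_realfun lra ring.
Import Order.TTheory GRing.Theory Num.Theory.
Import numFieldNormedType.Exports.
Local Open Scope classical_set_scope.
Local Open Scope ring_scope.

Set Implicit Arguments. Unset Strict Implicit. Unset Printing Implicit Defensive.

Lemma cont_meas (R : realType) (T : ptopologicalType) (f : T -> R) :
  continuous f -> @measurable_fun _ _ (Borel T) R setT f.
Proof.
move=> cf; apply: (measurability _ (RGenOpens.measurableE R)).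
move=> _ [_ [a [b ->] <-]]; apply: sub_sigma_algebra; rewrite setTI.
by move/continuousP: cf; apply; exact: interval_open.
Qed.

Lemma cont_bounded (R : realType) (T : ptopologicalType) (f : T -> R) :
  compact [set: T] -> continuous f -> exists B, forall x, `|f x| <= B.
Proof.
move=> cT cf.
have := compact_bounded (continuous_compact (continuous_subspaceT (A := setT) cf) cT).
case=> B [_ HB]; exists (B + 1) => x.
by apply: (HB (B + 1)); [rewrite ltrDl|exists x].
Qed.

Lemma cont_integrable (R : realType) (T : ptopologicalType)
  (mu : {measure set (Borel T) -> \bar R}) (f : T -> R) :
  compact [set: T] -> (mu setT < +oo)%E -> continuous f ->
  mu.-integrable setT (EFin \o f).
Proof.
move=> cT muT cf; apply/integrableP; split.
  by apply/measurable_EFinP; exact: cont_meas.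
have [B HB] := cont_bounded cT cf.
apply: le_lt_trans.
  apply: (@integral_le_bound _ _ _ mu setT (EFin \o f) (`|B|)%:E) => //.
  - by apply/measurable_EFinP; exact: cont_meas.
  - by apply: aeW => x _; rewrite /= lee_fin (le_trans (HB x)) // ler_norm.
by rewrite lte_mul_pinfty.
Qed.

Lemma cont_pos_min (R : realType) (T : ptopologicalType) (f : T -> R) :
  compact [set: T] -> continuous f -> (forall x, 0 < f x) ->
  exists2 m, 0 < m & forall x, m <= f x.
Proof.
move=> cT cf fp.
have cg : continuous (fun x => (f x)^-1).
  by move=> x; apply: cvgV; [rewrite gt_eqF|exact: cf].
have [B HB] := cont_bounded cT cg.
have B0 : 0 < B.
  apply: lt_le_trans (HB point); rewrite normr_gt0 invr_eq0 gt_eqF //.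
exists B^-1; first by rewrite invr_gt0.
move=> x; rewrite -[f x]invrK lef_pV2 ?posrE ?invr_gt0 //.
by apply: le_trans (HB x); rewrite ler_norm.
Qed.

Lemma cont_at_sum (R : realType) (T : topologicalType) (I : Type) (r : seq I)
  (P : pred I) (F : I -> T -> R) (x : T) :
  (forall i, F i @ x --> F i x) ->
  (fun y => \sum_(i <- r | P i) F i y) @ x --> \sum_(i <- r | P i) F i x.
Proof.
move=> cF; elim: r => [|a r IH].
  have -> : (fun y => \sum_(i <- [::] | P i) F i y) = fun=> 0.
    by apply: funext => y; rewrite big_nil.
  by rewrite big_nil; exact: cvg_cst.
have -> : (fun y => \sum_(i <- a :: r | P i) F i y) =
   fun y => if P a then F a y + \sum_(i <- r | P i) F i y
            else \sum_(i <- r | P i) F i y.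
  by apply: funext => y; rewrite big_cons.
rewrite big_cons; case: (P a) => //.
exact: cvgD (cF a) IH.
Qed.

Lemma cont_ind (R : realType) (T : topologicalType) (A : set T) (g : T -> R) :
  open A -> open (~` A) -> {in A, continuous g} ->
  continuous (fun x => \1_A x * g x).
Proof.
move=> oA oCA cg x; have [Ax|nAx] := pselect (A x).
  rewrite /continuous_at indicE mem_set // mul1r.
  apply: (cvg_trans _ (cg x (mem_set Ax))); apply: near_eq_cvg.
  apply: filterS (open_nbhs_nbhs (conj oA Ax)) => y Ay /=.
  by rewrite indicE mem_set // mul1r.
rewrite /continuous_at indicE memNset // mul0r.
apply: (@cvg_trans _ ((fun=> (0:R)) @ x)); last exact: cvg_cst.
apply: near_eq_cvg.
apply: filterS (open_nbhs_nbhs (conj oCA nAx)) => y Ay /=.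
by rewrite indicE memNset // mul0r.
Qed.

Section MxLemmas.
Context (R : realFieldType) (n : nat) (Nm : 'M[R]_n).
Hypothesis N0 : forall a b, 0 <= Nm a b.
Hypothesis N1 : forall a, \sum_b Nm a b < 1.

Lemma ex_min_ord (F : 'I_n -> R) (a0 : 'I_n) : exists a, forall b, F a <= F b.
Proof.
case: (@arg_minP _ _ _ a0 xpredT F isT) => a _ H; exists a => b; exact: H.
Qed.

Lemma mx_pos (v c : 'cV[R]_n) :
  (forall a, v a 0 = c a 0 + \sum_b Nm a b * v b 0) ->
  (forall a, 0 <= c a 0) -> forall a, 0 <= v a 0.
Proof.
move=> hv hc a0; have [a Ha] := ex_min_ord (fun a => v a 0) a0.
suff h : 0 <= v a 0 by exact: le_trans h (Ha a0).
rewrite leNgt; apply/negP => va.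
have : (\sum_b Nm a b) * v a 0 <= v a 0.
  rewrite [X in _ <= X]hv mulr_suml; apply: ler_wpDl => //.
  by apply: ler_sum => b _; apply: ler_wpM2l.
have := N1 a; move: (\sum_b Nm a b) => s; nra.
Qed.

Lemma mx_zero (v : 'cV[R]_n) :
  (forall a, v a 0 = \sum_b Nm a b * v b 0) -> forall a, v a 0 = 0.
Proof.
move=> hv a; apply/eqP; rewrite eq_le; apply/andP; split.
  have := @mx_pos (- v) 0 _ _ a; rewrite mxE oppr_ge0; apply => [b|b]; last by rewrite mxE.
  rewrite !mxE add0r (hv b) -sumrN; apply: eq_bigr => c _; rewrite mxE mulrN //.
by apply: (@mx_pos v 0) => b; rewrite mxE ?add0r.
Qed.

Lemma mx_unit : (1%:M - Nm) \in unitmx.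
Proof.
rewrite unitmxE unitfE -det_tr; apply/negP => /det0P [v v0 vA].
have hw : forall a, (v^T) a 0 = \sum_b Nm a b * (v^T) b 0.
  move=> a; have := congr1 (fun A : 'rV_n => A 0 a) vA; rewrite !mxE.
  under eq_bigr => b _ do rewrite !mxE mulrBr.
  rewrite sumrB (bigD1 a) //=.
  rewrite big1 => [|b /negPf]; last by rewrite eq_sym => ->; rewrite mulr0.
  rewrite eqxx mulr1 addr0 => /eqP; rewrite subr_eq0 => /eqP ->.
  by apply: eq_bigr => b _; rewrite !mxE mulrC.
move/negP: v0; apply; apply/eqP/rowP => a.
by have := mx_zero hw a; rewrite !mxE.
Qed.

Lemma mx_sol (c : 'cV[R]_n) (a : 'I_n) :
  (invmx (1%:M - Nm) *m c) a 0 = c a 0 + \sum_b Nm a b * (invmx (1%:M - Nm) *m c) b 0.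
Proof.
set v := invmx _ *m c.
have : (1%:M - Nm) *m v = c by rewrite /v mulKVmx // mx_unit.
move=> /(congr1 (fun A : 'cV_n => A a 0)); rewrite mulmxBl mul1mx !mxE => <-.
by rewrite subrK.
Qed.

Lemma mx_uniq (v c : 'cV[R]_n) :
  (forall a, v a 0 = c a 0 + \sum_b Nm a b * v b 0) ->
  v = invmx (1%:M - Nm) *m c.
Proof.
move=> hv; have hw := mx_sol c; move: (invmx _ *m c) hw => w hw.
suff h : forall a, (v - w) a 0 = 0.
  by apply/colP => a; have := h a; rewrite !mxE => /eqP; rewrite subr_eq0 => /eqP.
apply: mx_zero => a; rewrite !mxE hv hw.
rewrite opprD addrACA subrr add0r -sumrB; apply: eq_bigr => b _.
by rewrite !mxE mulrBr.
Qed.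

Lemma mx_bound (v c : 'cV[R]_n) (r C : R) :
  (forall a, \sum_b Nm a b <= r) ->
  (forall a, v a 0 = c a 0 + \sum_b Nm a b * v b 0) ->
  (forall a, `|c a 0| <= C) -> forall a, (1 - r) * `|v a 0| <= C.
Proof.
move=> hr hv hc a0; have [a Ha] := ex_min_ord (fun a => - `|v a 0|) a0.
have Ha' : forall b, `|v b 0| <= `|v a 0| by move=> b; rewrite -lerN2 Ha.
have r0 : 0 <= r by apply: le_trans (hr a); apply: sumr_ge0.
have h : `|v a 0| <= C + r * `|v a 0|.
  rewrite {1}hv; apply: le_trans (ler_normD _ _) _; apply: lerD => //.
  apply: le_trans (ler_norm_sum _ _ _) _.
  apply: le_trans (_ : \sum_b Nm a b * `|v a 0| <= _).
    apply: ler_sum => b _; rewrite normrM ger0_norm //.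
    by apply: ler_wpM2l.
  by rewrite -mulr_suml; apply: ler_wpM2r.
have C0 : 0 <= C := le_trans (normr_ge0 _) (hc a0).
have := Ha' a0; have := normr_ge0 (v a0 0).
move: h; move: `|v a0 0| `|v a 0| => x y h x0 xy.
have [r1|r1] := lerP r 1; nra.
Qed.


Lemma mx_posF (v c : 'I_n -> R) :
  (forall a, v a = c a + \sum_b Nm a b * v b) ->
  (forall a, 0 <= c a) -> forall a, 0 <= v a.
Proof.
move=> hv hc a; have := @mx_pos (\col_a v a) (\col_a c a) _ _ a; rewrite mxE; apply.
  by move=> b; rewrite !mxE hv; congr (_ + _); apply: eq_bigr => d _; rewrite mxE.
by move=> b; rewrite mxE.
Qed.

Lemma mx_zeroF (v : 'I_n -> R) :
  (forall a, v a = \sum_b Nm a b * v b) -> forall a, v a = 0.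
Proof.
move=> hv a; have := @mx_zero (\col_a v a) _ a; rewrite mxE; apply.
by move=> b; rewrite !mxE hv; apply: eq_bigr => d _; rewrite mxE.
Qed.

Lemma mx_boundF (v c : 'I_n -> R) (r C : R) :
  (forall a, \sum_b Nm a b <= r) ->
  (forall a, v a = c a + \sum_b Nm a b * v b) ->
  (forall a, `|c a| <= C) -> forall a, (1 - r) * `|v a| <= C.
Proof.
move=> hr hv hc a; have := @mx_bound (\col_a v a) (\col_a c a) r C hr _ _ a; rewrite mxE; apply.
  by move=> b; rewrite !mxE hv; congr (_ + _); apply: eq_bigr => d _; rewrite mxE.
by move=> b; rewrite mxE.
Qed.

End MxLemmas.

Unset Implicit Arguments.

Section Main.
Context (R : realType) (T : pseudoPMetricType R)
  (N M : nat) (S : 'I_N -> set T)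
  (Res : 'I_N -> R -> (T -> R) -> T -> R)
  (kappa : 'I_N -> nat) (phi : forall i : 'I_N, 'I_(kappa i) -> T -> R)
  (p : forall i : 'I_N, 'I_(kappa i) -> {measure set (Borel T) -> \bar R}).
Hypothesis cT : compact [set: T].
Hypothesis Sdisj : forall i j : 'I_N, i != j -> S i `&` S j = set0.
Hypothesis Scov : \bigcup_(i in [set: 'I_N]) S i = [set: T].
Hypothesis Sopen : forall i, open (S i).
Hypothesis HF : forall i, feller_resolvent (S i) (Res i).
Hypothesis Hcons : forall i : 'I_N, (M <= i)%N -> conservative (S i) (Res i).
Hypothesis Hphi : forall (i : 'I_N) (j : 'I_(kappa i)), (i < M)%N ->
     [/\ {within S i, continuous phi i j},
         (forall x, S i x -> 0 <= phi i j x <= 1),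
         (forall lam : R, 0 < lam -> forall x, S i x ->
            lam * Res i lam (phi i j) x <= phi i j x) &
         (forall lam : R, 0 < lam -> exists2 x, S i x &
            lam * Res i lam (phi i j) x != phi i j x)].
Hypothesis Hsum : forall i : 'I_N, (i < M)%N ->
     forall x, S i x -> \sum_(j < kappa i) phi i j x = 1.
Hypothesis Hsub : forall (i : 'I_N) (j : 'I_(kappa i)), (i < M)%N -> (p i j [set: T] <= 1)%E.

Set Implicit Arguments. Unset Strict Implicit.

Definition cin (A : set T) (f : T -> R) := forall x, A x -> f @ x --> f x.

Lemma cinP A f : open A -> {within A, continuous f} <-> cin A f.
Proof.
move=> oA; rewrite continuous_open_subspace //; split.
  by move=> h x Ax; exact: h x (mem_set Ax).
by move=> h x /set_mem Ax; exact: h x Ax.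
Qed.

Lemma cin_cont A f : continuous f -> cin A f.
Proof. by move=> cf x _; exact: cf. Qed.

Lemma cinD A f g : cin A f -> cin A g -> cin A (fun x => f x + g x).
Proof. by move=> cf cg x Ax; apply: cvgD; [exact: cf|exact: cg]. Qed.

Lemma cinM A f g : cin A f -> cin A g -> cin A (fun x => f x * g x).
Proof. by move=> cf cg x Ax; apply: cvgM; [exact: cf|exact: cg]. Qed.

Lemma cinC A c : cin A (fun=> c).
Proof. by move=> x _; exact: cvg_cst. Qed.

Lemma cinZ A c f : cin A f -> cin A (fun x => c * f x).
Proof. by move=> cf; apply: cinM => //; exact: cinC. Qed.

Lemma cinB A f g : cin A f -> cin A g -> cin A (fun x => f x - g x).
Proof.
move=> cf cg; have := cinD cf (cinZ (c:=-1) cg).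
by congr cin; apply: funext => x; rewrite mulN1r.
Qed.

Lemma cin_sum A (I : Type) (r : seq I) (P : pred I) (F : I -> T -> R) :
  (forall i, cin A (F i)) -> cin A (fun x => \sum_(i <- r | P i) F i x).
Proof. by move=> cF x Ax; apply: cont_at_sum => i; exact: cF. Qed.

Lemma contP f : continuous f <-> cin setT f.
Proof. by split => [cf x _|h x]; [exact: cf|exact: h]. Qed.

Lemma S_uniq i k x : S i x -> S k x -> i = k.
Proof.
move=> Si Sk; apply/eqP; apply/negPn/negP => ik.
by have := Sdisj _ _ ik; rewrite -subset0 => /(_ x) []; split.
Qed.

Lemma S_ex x : exists k, S k x.
Proof.
have : [set: T] x by [].
by rewrite -Scov => -[k _ Skx]; exists k.
Qed.

Lemma SC_open i : open (~` S i).
Proof.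
have -> : ~` S i = \bigcup_(k in [set k | k != i]) S k.
  apply/seteqP; split => x.
    move=> nSi; have [k Sk] := S_ex x; exists k => //=.
    by apply/negP => /eqP ki; apply: nSi; rewrite -ki.
  by move=> [k /= ki Sk] Si; move/negP: ki; apply; rewrite (S_uniq Sk Si).
by apply: bigcup_open => k _; exact: Sopen.
Qed.

Lemma ind_sum k x (G : 'I_N -> R) : S k x ->
  \sum_(i < N) \1_(S i) x * G i = G k.
Proof.
move=> Sk; rewrite (bigD1 k) //= indicE mem_set // mul1r big1 ?addr0 //.
move=> i ik; rewrite indicE memNset ?mul0r // => Si.
by move/negP: ik; apply; rewrite (S_uniq Si Sk).
Qed.

Lemma cont_indS i g : cin (S i) g -> continuous (fun x => \1_(S i) x * g x).
Proof.
move=> cg; apply: cont_ind; [exact: Sopen|exact: SC_open|].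
by move=> x /set_mem Sx; exact: cg.
Qed.


Section ResFacts.
Variable i : 'I_N.
Local Notation cS := (cin (S i)).

Lemma R_loc lam f g : 0 < lam -> (forall x, S i x -> f x = g x) ->
  forall x, S i x -> Res i lam f x = Res i lam g x.
Proof. by have [h _] := HF i; exact: h. Qed.

Lemma R_cin lam f : 0 < lam -> cS f -> cS (Res i lam f).
Proof.
have [_ [h _]] := HF i; move=> l0 /(cinP _ (Sopen i)) cf.
by apply/(cinP _ (Sopen i)); exact: h.
Qed.

Lemma R_lin lam a f g : 0 < lam -> cS f -> cS g -> forall x, S i x ->
  Res i lam (fun y => a * f y + g y) x = a * Res i lam f x + Res i lam g x.
Proof.
have [_ [_ [h _]]] := HF i; move=> l0 /(cinP _ (Sopen i)) cf /(cinP _ (Sopen i)) cg.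
exact: h.
Qed.

Lemma R_hil lam mu f : 0 < lam -> 0 < mu -> cS f -> forall x, S i x ->
  Res i lam f x - Res i mu f x = (mu - lam) * Res i lam (Res i mu f) x.
Proof.
have [_ [_ [_ [h _]]]] := HF i; move=> l0 m0 /(cinP _ (Sopen i)) cf.
exact: h.
Qed.

Lemma R_conv f : cS f -> forall eps, 0 < eps -> exists L, forall lam, L < lam ->
  forall x, S i x -> `|lam * Res i lam f x - f x| < eps.
Proof.
have [_ [_ [_ [_ [h _]]]]] := HF i; move=> /(cinP _ (Sopen i)) cf.
exact: h.
Qed.

Lemma R_pos lam f : 0 < lam -> cS f -> (forall x, S i x -> 0 <= f x) ->
  forall x, S i x -> 0 <= Res i lam f x.
Proof.
have [_ [_ [_ [_ [_ [h _]]]]]] := HF i; move=> l0 /(cinP _ (Sopen i)) cf.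
exact: h.
Qed.

Lemma R_sub1 lam : 0 < lam -> forall x, S i x -> lam * Res i lam (fun _ => 1) x <= 1.
Proof. by have [_ [_ [_ [_ [_ [_ h]]]]]] := HF i; exact: h. Qed.

Lemma R_zero lam x : 0 < lam -> S i x -> Res i lam (fun _ => 0) x = 0.
Proof.
move=> l0 Sx.
have := R_lin 1 l0 (@cinC (S i) 0) (@cinC (S i) 0) Sx.
rewrite (_ : (fun _ => 1 * 0 + 0) = fun _ => 0); last by apply: funext => y; rewrite mul1r addr0.
lra.
Qed.

Lemma R_Z lam a f x : 0 < lam -> cS f -> S i x ->
  Res i lam (fun y => a * f y) x = a * Res i lam f x.
Proof.
move=> l0 cf Sx; have := R_lin a l0 cf (@cinC (S i) 0) Sx.
rewrite (_ : (fun y => a * f y + 0) = fun y => a * f y); last by apply: funext => y; rewrite addr0.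
by rewrite R_zero // addr0.
Qed.

Lemma R_D lam f g x : 0 < lam -> cS f -> cS g -> S i x ->
  Res i lam (fun y => f y + g y) x = Res i lam f x + Res i lam g x.
Proof.
move=> l0 cf cg Sx; have := R_lin 1 l0 cf cg Sx.
rewrite (_ : (fun y => 1 * f y + g y) = fun y => f y + g y); last by apply: funext => y; rewrite mul1r.
by rewrite mul1r.
Qed.

Lemma R_B lam f g x : 0 < lam -> cS f -> cS g -> S i x ->
  Res i lam (fun y => f y - g y) x = Res i lam f x - Res i lam g x.
Proof.
move=> l0 cf cg Sx; have := R_lin (-1) l0 cg cf Sx.
rewrite (_ : (fun y => -1 * g y + f y) = fun y => f y - g y); last by apply: funext => y; rewrite mulN1r addrC.
by rewrite mulN1r addrC.
Qed.

Lemma R_sum lam (I : Type) (r : seq I) (F : I -> T -> R) x : 0 < lam ->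
  (forall b, cS (F b)) -> S i x ->
  Res i lam (fun y => \sum_(b <- r) F b y) x = \sum_(b <- r) Res i lam (F b) x.
Proof.
move=> l0 cF Sx; elim: r => [|a r IH].
  rewrite big_nil (_ : (fun y => \sum_(b <- [::]) F b y) = fun _ => 0); last first.
    by apply: funext => y; rewrite big_nil.
  exact: R_zero.
rewrite big_cons (_ : (fun y => \sum_(b <- a :: r) F b y) =
  fun y => F a y + \sum_(b <- r) F b y); last by apply: funext => y; rewrite big_cons.
by rewrite R_D // -?IH //; apply: cin_sum.
Qed.

Lemma R_mono lam f g x : 0 < lam -> cS f -> cS g ->
  (forall y, S i y -> f y <= g y) -> S i x -> Res i lam f x <= Res i lam g x.
Proof.
move=> l0 cf cg fg Sx; rewrite -subr_ge0 -R_B //.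
by apply: R_pos => //; [exact: cinB|move=> y Sy; rewrite subr_ge0 fg].
Qed.

Lemma R_cst lam c x : 0 < lam -> S i x ->
  Res i lam (fun _ => c) x = c * Res i lam (fun _ => 1) x.
Proof.
move=> l0 Sx; rewrite -R_Z //; last exact: cinC.
by congr (Res i lam _ x); apply: funext => y; rewrite mulr1.
Qed.

Lemma R_ge0_1 lam x : 0 < lam -> S i x -> 0 <= Res i lam (fun _ => 1) x.
Proof. by move=> l0 Sx; apply: R_pos => //; exact: cinC. Qed.

Lemma R_bound lam f B x : 0 < lam -> cS f -> (forall y, S i y -> `|f y| <= B) ->
  S i x -> `|lam * Res i lam f x| <= B.
Proof.
move=> l0 cf fB Sx.
have B0 : 0 <= B := le_trans (normr_ge0 _) (fB x Sx).
have h1 := R_mono l0 cf (@cinC (S i) B) (fun y Sy => le_trans (ler_norm _) (fB y Sy)) Sx.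
have h2 : Res i lam (fun _ => - B) x <= Res i lam f x.
  apply: R_mono => //; first exact: cinC.
  by move=> y Sy; rewrite lerNl; apply: le_trans (fB y Sy); rewrite -normrN ler_norm.
rewrite R_cst // in h1; rewrite R_cst // in h2.
have := R_sub1 l0 Sx; have := R_ge0_1 l0 Sx.
move: h1 h2; move: (Res i lam f x) (Res i lam (fun=> 1) x) => a r h1 h2 r0 r1.
rewrite ler_norml; apply/andP; split; nra.
Qed.


Lemma R_pos1 lam x : 0 < lam -> S i x -> 0 < Res i lam (fun _ => 1) x.
Proof.
move=> l0 Sx; rewrite lt_neqAle R_ge0_1 // andbT; apply/negP => /eqP h0.
have key : forall mu, 0 < mu -> Res i mu (fun _ => 1) x = 0.
  move=> mu m0.
  have hh := R_hil l0 m0 (@cinC (S i) 1) Sx.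
  have z : Res i lam (Res i mu (fun _ => 1)) x = 0.
    apply/eqP; rewrite eq_le; apply/andP; split.
      apply: le_trans (R_mono (g := fun _ => mu^-1) l0 (R_cin m0 (@cinC (S i) 1)) (@cinC (S i) _) _ Sx) _.
        move=> y Sy; rewrite -(ler_pM2l m0) mulfV ?gt_eqF //.
        exact: R_sub1.
      by rewrite R_cst // -h0 mulr0.
    apply: R_pos => //; first exact: (R_cin m0 (@cinC (S i) 1)).
    by move=> y Sy; exact: R_ge0_1.
  by move: hh; rewrite z mulr0 -h0 => /eqP; rewrite sub0r oppr_eq0 => /eqP.
have e0 : 0 < 1/2 :> R by rewrite divr_gt0.
have [L HL] := R_conv (@cinC (S i) 1) e0.
have mu0 : 0 < `|L| + 1 by rewrite ltr_pwDr // normr_ge0.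
have Ll : L < `|L| + 1.
  by apply: le_lt_trans (ler_norm L) _; rewrite ltrDl.
have := HL (`|L| + 1) Ll x Sx; rewrite key // mulr0 sub0r normrN normr1.
by move=> h; lra.
Qed.

End ResFacts.


Lemma Rdu_at k (lam : R) (f : T -> R) x : 0 < lam -> S k x -> Rdu S Res lam f x = Res k lam f x.
Proof.
move=> l0 Sk; rewrite /Rdu (@ind_sum k x (fun i => Res i lam (fun y => \1_(S i) y * f y) x) Sk).
by apply: R_loc => // y Sy; rewrite indicE mem_set // mul1r.
Qed.


Lemma Rdu_cont (lam : R) (f : T -> R) : 0 < lam -> continuous f -> continuous (Rdu S Res lam f).
Proof.
move=> l0 cf; apply/contP; rewrite /Rdu; apply: cin_sum => i; apply: cin_cont.
apply: cont_indS; apply: R_cin => //; apply: cin_cont; apply: cont_indS.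
exact: cin_cont.
Qed.

Lemma Rdu_lin (lam a : R) (f g : T -> R) x : 0 < lam -> continuous f -> continuous g ->
  Rdu S Res lam (fun y => a * f y + g y) x = a * Rdu S Res lam f x + Rdu S Res lam g x.
Proof.
move=> l0 cf cg; have [k Sk] := S_ex x; rewrite !(Rdu_at _ l0 Sk).
by apply: R_lin => //; apply: cin_cont.
Qed.

Lemma Rdu_sum (lam : R) (I : Type) (r : seq I) (F : I -> T -> R) x : 0 < lam ->
  (forall b, continuous (F b)) ->
  Rdu S Res lam (fun y => \sum_(b <- r) F b y) x = \sum_(b <- r) Rdu S Res lam (F b) x.
Proof.
move=> l0 cF; have [k Sk] := S_ex x; rewrite !(Rdu_at _ l0 Sk) R_sum //.
  by apply: eq_bigr => b _; rewrite (Rdu_at _ l0 Sk).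
by move=> b; apply: cin_cont.
Qed.

Lemma Rdu_hil (lam mu : R) (f : T -> R) x : 0 < lam -> 0 < mu -> continuous f ->
  Rdu S Res lam f x - Rdu S Res mu f x = (mu - lam) * Rdu S Res lam (Rdu S Res mu f) x.
Proof.
move=> l0 m0 cf; have [k Sk] := S_ex x.
rewrite !(Rdu_at _ l0 Sk) (Rdu_at _ m0 Sk) R_hil //; last exact: cin_cont.
congr (_ * _); apply: R_loc => // y Sy; by rewrite (Rdu_at _ m0 Sy).
Qed.

Section Ell.
Variables (i : 'I_N) (j : 'I_(kappa i)).
Hypothesis iM : (i < M)%N.

Lemma phi_cin : cin (S i) (phi i j).
Proof. by have [h _ _ _] := Hphi i j iM; apply/(cinP _ (Sopen i)). Qed.

Lemma ell_in (lam : R) x : S i x -> ell S Res phi j lam x = phi i j x - lam * Res i lam (phi i j) x.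
Proof. by move=> Sx; rewrite /ell indicE mem_set // mul1r. Qed.

Lemma ell_out (lam : R) x : ~ S i x -> ell S Res phi j lam x = 0.
Proof. by move=> Sx; rewrite /ell indicE memNset // mul0r. Qed.

Lemma ell_cont (lam : R) : 0 < lam -> continuous (ell S Res phi j lam).
Proof.
move=> l0; apply: cont_indS; apply: cinB; first exact: phi_cin.
by apply: cinZ; apply: R_cin => //; exact: phi_cin.
Qed.

Lemma ell_ge0 (lam : R) x : 0 < lam -> 0 <= ell S Res phi j lam x.
Proof.
move=> l0; have [Sx|nSx] := pselect (S i x); last by rewrite ell_out.
have [_ _ h _] := Hphi i j iM.
by rewrite ell_in // subr_ge0; apply: h.
Qed.

Lemma ell_hil (lam mu : R) x : 0 < lam -> 0 < mu ->
  ell S Res phi j lam x - ell S Res phi j mu x =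
  (mu - lam) * Rdu S Res lam (ell S Res phi j mu) x.
Proof.
move=> l0 m0; have [k Sk] := S_ex x; rewrite (Rdu_at _ l0 Sk).
have [Si|nSi] := pselect (S i x); last first.
  rewrite !ell_out // (@R_loc k lam _ (fun _ => 0)) ?R_zero ?mulr0 ?subrr //.
  move=> y Sy; apply: ell_out => Siy.
  by apply: nSi; rewrite (S_uniq Siy Sy).
have ki := S_uniq Sk Si; subst k.
have pc := phi_cin; have rc := R_cin m0 pc.
rewrite (@R_loc i lam (ell S Res phi j mu) (fun y => phi i j y - mu * Res i mu (phi i j) y)) //; last first.
  by move=> y Sy; rewrite ell_in.
rewrite !ell_in //.
rewrite R_B //; last exact: cinZ.
rewrite R_Z // mulrBr (mulrCA _ mu) -R_hil //.
ring.
Qed.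

End Ell.


Local Notation n := #|{: IJ M kappa}|.

Lemma sum_IJ (F : IJ M kappa -> R) :
  \sum_(ij : IJ M kappa) F ij = \sum_(a < n) F (enum_val a).
Proof.
rewrite -(big_enum_val (A := {: IJ M kappa})).
by apply: eq_bigl => ij; rewrite inE.
Qed.

Lemma ell_sumIJ k (lam : R) x : 0 < lam -> S k x ->
  \sum_(ij : IJ M kappa) ell S Res phi (ijJ ij) lam x =
  if (k < M)%N then 1 - lam * Res k lam (fun _ => 1) x else 0.
Proof.
move=> l0 Sk; case: ifPn => kM; last first.
  apply: big1 => -[[i' j'] H] _ /=.
  have nS : ~ S i' x.
    by move=> Si; move/negP: kM; apply; rewrite -(S_uniq Si Sk).
  exact: (ell_out j' lam nS).
pose mk (j : 'I_(kappa k)) : IJ M kappa :=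
  exist (fun ij : {i : 'I_N & 'I_(kappa i)} => (tag ij < M)%N)
        (Tagged (fun i => 'I_(kappa i)) j) kM.
have mk_inj : injective mk.
  move=> j1 j2 /(congr1 val) /(congr1 (tagged_as (Tagged (fun i => 'I_(kappa i)) j1))).
  by rewrite !tagged_asE.
rewrite (bigID (fun ij => ij \in mk @: setT)) /= [X in _ + X]big1 ?addr0; last first.
  move=> [[i' j'] H] /= nin.
  have [ik|ik] := eqVneq i' k.
    subst i'; exfalso; move/negP: nin; apply; apply/imsetP; exists j'; first by rewrite in_setT.
    by apply: val_inj.
  have nS : ~ S i' x.
    by move=> Si; move/negP: ik; apply; rewrite (S_uniq Si Sk).
  exact: (ell_out j' lam nS).
rewrite (big_imset _ (in2W mk_inj)) /=.
rewrite (eq_bigl xpredT (fun j => ell S Res phi j lam x)); last by move=> j; rewrite in_setT.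
under eq_bigr => j _ do rewrite (ell_in j lam Sk).
rewrite sumrB Hsum // -mulr_sumr -R_sum //; last by move=> j; exact: phi_cin.
congr (_ - _ * _); apply: R_loc => // y Sy; exact: Hsum.
Qed.


Section Integrals.
Variable a : 'I_n.
Local Notation mu := (p _ (ijJ (enum_val a))).

Lemma pa_le1 : (mu setT <= 1)%E.
Proof. exact: Hsub _ _ (valP (enum_val a)). Qed.

Lemma pa_fin : (mu setT < +oo)%E.
Proof. exact: le_lt_trans pa_le1 (ltry _). Qed.

Lemma Ia_int h : continuous h -> mu.-integrable setT (EFin \o h).
Proof. by move=> ch; apply: cont_integrable => //; exact: pa_fin. Qed.

Implicit Types (f g h : T -> R) (c B : R).

Definition Ia (h : T -> R) := Rintegral mu setT h.
Definition Pa := fine (mu setT).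

Lemma Pa_ge0 : 0 <= Pa.
Proof. by rewrite /Pa fine_ge0. Qed.

Lemma Pa_le1 : Pa <= 1.
Proof.
rewrite /Pa; have := pa_le1; have := measure_ge0 mu setT.
by case: (mu setT) => //= r; rewrite !lee_fin.
Qed.

Lemma Ia_ext f g : (forall x, f x = g x) -> Ia f = Ia g.
Proof. by move=> fg; congr Ia; apply: funext. Qed.

Lemma IaD f g : continuous f -> continuous g -> Ia (fun x => f x + g x) = Ia f + Ia g.
Proof. by move=> cf cg; apply: RintegralD => //; exact: Ia_int. Qed.

Lemma IaB f g : continuous f -> continuous g -> Ia (fun x => f x - g x) = Ia f - Ia g.
Proof. by move=> cf cg; apply: RintegralB => //; exact: Ia_int. Qed.

Lemma IaZ c f : continuous f -> Ia (fun x => c * f x) = c * Ia f.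
Proof. by move=> cf; apply: RintegralZl => //; exact: Ia_int. Qed.

Lemma Ia_cst c : Ia (fun _ => c) = c * Pa.
Proof. exact: Rintegral_cst. Qed.

Lemma Ia_ge0 f : (forall x, 0 <= f x) -> 0 <= Ia f.
Proof. by move=> f0; apply: Rintegral_ge0 => x _. Qed.

Lemma Ia_mono f g : continuous f -> continuous g -> (forall x, f x <= g x) -> Ia f <= Ia g.
Proof. by move=> cf cg fg; apply: le_Rintegral => //; exact: Ia_int. Qed.

Lemma Ia_sum (I : Type) (r : seq I) (F : I -> T -> R) :
  (forall b, continuous (F b)) ->
  Ia (fun x => \sum_(b <- r) F b x) = \sum_(b <- r) Ia (F b).
Proof.
move=> cF; elim: r => [|c r IH].
  rewrite big_nil (Ia_ext (g := fun _ => 0)); last by move=> x; rewrite big_nil.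
  by rewrite Ia_cst mul0r.
rewrite big_cons (Ia_ext (g := fun x => F c x + \sum_(b <- r) F b x)); last first.
  by move=> x; rewrite big_cons.
rewrite IaD ?IH //; apply/contP; apply: cin_sum => b; exact/contP.
Qed.

Lemma Ia_abs f B : continuous f -> (forall x, `|f x| <= B) -> `|Ia f| <= B.
Proof.
move=> cf fB.
have B0 : 0 <= B := le_trans (normr_ge0 _) (fB point).
have h1 : Ia f <= Ia (fun _ => B).
  apply: Ia_mono => //; first exact: cst_continuous.
  by move=> x; apply: le_trans (fB x); exact: ler_norm.
have h2 : Ia (fun _ => - B) <= Ia f.
  apply: Ia_mono => //; first exact: cst_continuous.
  by move=> x; rewrite lerNl; apply: le_trans (fB x); rewrite -normrN ler_norm.
rewrite !Ia_cst in h1 h2; have := Pa_ge0; have := Pa_le1.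
move: h1 h2; move: (Ia f) Pa => v P h1 h2 P1 P0.
rewrite ler_norml; apply/andP; split; nra.
Qed.

End Integrals.

Implicit Types (a b : 'I_n) (f : T -> R).

Local Notation E a lam := (ell S Res phi (ijJ (enum_val a)) lam).

Lemma E_cont a (lam : R) : 0 < lam -> continuous (E a lam).
Proof. by move=> l0; apply: ell_cont => //; exact: (valP (enum_val a)). Qed.

Lemma E_ge0 a (lam : R) x : 0 < lam -> 0 <= E a lam x.
Proof. by move=> l0; apply: ell_ge0 => //; exact: (valP (enum_val a)). Qed.

Lemma NmxE (lam : R) a b : Nmx M S Res phi p lam a b = Ia a (E b lam).
Proof.
rewrite mxE /Ia Rintegral_mkcond; apply: eq_Rintegral => x _.
rewrite patchE; case: ifPn => // /negP nS.
have nS' : ~ S (ijI (enum_val b)) x by move=> Sx; apply: nS; exact: mem_set.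
by rewrite indicE memNset // mul0r.
Qed.

Lemma bvecE (f : T -> R) (lam : R) a : bvec M S Res p f lam a 0 = Ia a (Rdu S Res lam f).
Proof. by rewrite mxE. Qed.

Definition U (f : T -> R) (lam : R) :=
  invmx (1%:M - Nmx M S Res phi p lam) *m bvec M S Res p f lam.

Lemma RcoE (lam : R) f x :
  Rco M S Res phi p lam f x = Rdu S Res lam f x + \sum_(a < n) U f lam a 0 * E a lam x.
Proof.
rewrite /Rco /u sum_IJ; congr (_ + _); apply: eq_bigr => a _.
by rewrite enum_valK.
Qed.

Definition D (lam : R) x := \sum_(a < n) E a lam x.

Lemma DE k (lam : R) x : 0 < lam -> S k x ->
  D lam x = if (k < M)%N then 1 - lam * Res k lam (fun _ => 1) x else 0.
Proof.
move=> l0 Sk; rewrite /D -(sum_IJ (fun ij => ell S Res phi (ijJ ij) lam x)).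
exact: ell_sumIJ.
Qed.

Lemma D_cont (lam : R) : 0 < lam -> continuous (D lam).
Proof. by move=> l0; apply/contP; apply: cin_sum => a; apply/contP; exact: E_cont. Qed.

Lemma D_ge0 (lam : R) x : 0 < lam -> 0 <= D lam x.
Proof. by move=> l0; apply: sumr_ge0 => a _; exact: E_ge0. Qed.

Lemma Nmx_ge0 (lam : R) a b : 0 < lam -> 0 <= Nmx M S Res phi p lam a b.
Proof. by move=> l0; rewrite NmxE; apply: Ia_ge0 => x; exact: E_ge0. Qed.

Lemma Nmx_row (lam : R) a : 0 < lam -> \sum_b Nmx M S Res phi p lam a b = Ia a (D lam).
Proof.
move=> l0; under eq_bigr => b _ do rewrite NmxE.
by rewrite -Ia_sum //; move=> b; exact: E_cont.
Qed.

Lemma D_bound (lam : R) : 0 < lam -> exists2 m, 0 < m & forall x, D lam x <= 1 - m.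
Proof.
move=> l0.
have cg : continuous (fun x => lam * Rdu S Res lam (fun _ => 1) x).
  by apply/contP; apply: cinZ; apply/contP; apply: Rdu_cont => //; exact: cst_continuous.
have gp : forall x, 0 < lam * Rdu S Res lam (fun _ => 1) x.
  move=> x; have [k Sk] := S_ex x; rewrite (Rdu_at _ l0 Sk).
  by rewrite mulr_gt0 // R_pos1.
have [m m0 hm] := cont_pos_min cT cg gp; exists m => // x.
have [k Sk] := S_ex x; rewrite (DE l0 Sk).
have := hm x; rewrite (Rdu_at _ l0 Sk) => h.
have h1 := R_sub1 l0 Sk.
case: ifP => _; lra.
Qed.

Lemma Nmx_row_lt1 (lam : R) a : 0 < lam -> \sum_b Nmx M S Res phi p lam a b < 1.
Proof.
move=> l0; rewrite Nmx_row //; have [m m0 hm] := D_bound l0.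
have h : Ia a (D lam) <= Ia a (fun _ => 1 - m).
  by apply: Ia_mono => //; [exact: D_cont|exact: cst_continuous].
rewrite Ia_cst in h; have := Pa_le1 a; have := Pa_ge0 a.
have m1 : m <= 1.
  have := hm point; have := D_ge0 point l0; lra.
move: h; move: (Ia a (D lam)) (Pa a) => v P h P0 P1; nra.
Qed.

Lemma U_sol f (lam : R) a : 0 < lam ->
  U f lam a 0 = Ia a (Rdu S Res lam f) + \sum_b Ia a (E b lam) * U f lam b 0.
Proof.
move=> l0; rewrite /U mx_sol; last by move=> c; exact: Nmx_row_lt1.
  by rewrite bvecE; congr (_ + _); apply: eq_bigr => b _; rewrite NmxE.
by move=> c d; exact: Nmx_ge0.
Qed.


Lemma contD f g : continuous f -> continuous g -> continuous (fun x => f x + g x).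
Proof. by move=> /contP cf /contP cg; apply/contP; exact: cinD. Qed.
Lemma contB f g : continuous f -> continuous g -> continuous (fun x => f x - g x).
Proof. by move=> /contP cf /contP cg; apply/contP; exact: cinB. Qed.
Lemma contZ (c : R) f : continuous f -> continuous (fun x => c * f x).
Proof. by move=> /contP cf; apply/contP; exact: cinZ. Qed.
Lemma cont_sumn (F : 'I_n -> T -> R) : (forall b, continuous (F b)) ->
  continuous (fun x => \sum_b F b x).
Proof. by move=> cF; apply/contP; apply: cin_sum => b; exact/contP. Qed.

Lemma Rco_fun (lam : R) f : Rco M S Res phi p lam f =
  fun x => Rdu S Res lam f x + \sum_(a < n) U f lam a 0 * E a lam x.
Proof. by apply: funext => x; rewrite RcoE. Qed.

Lemma Rco_cont (lam : R) f : 0 < lam -> continuous f -> continuous (Rco M S Res phi p lam f).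
Proof.
move=> l0 cf; rewrite Rco_fun; apply: contD; first exact: Rdu_cont.
by apply: cont_sumn => b; apply: contZ; exact: E_cont.
Qed.

Lemma Rdu_comb (lam : R) (h : T -> R) (c : 'I_n -> R) (F : 'I_n -> T -> R) x :
  0 < lam -> continuous h -> (forall b, continuous (F b)) ->
  Rdu S Res lam (fun y => h y + \sum_b c b * F b y) x =
  Rdu S Res lam h x + \sum_b c b * Rdu S Res lam (F b) x.
Proof.
move=> l0 ch cF; have [k Sk] := S_ex x; rewrite !(Rdu_at _ l0 Sk).
rewrite R_D //; first last.
- by apply: cin_cont; apply: cont_sumn => b; apply: contZ.
- exact: cin_cont.
rewrite (R_sum _ (F := fun b y => c b * F b y)) //; last first.
  by move=> b; apply: cin_cont; apply: contZ.
congr (_ + _); apply: eq_bigr => b _; rewrite R_Z ?(Rdu_at _ l0 Sk) //.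
exact: cin_cont.
Qed.

Lemma Ia_comb a (A B : T -> R) (c : 'I_n -> R) (F G : 'I_n -> T -> R) :
  continuous A -> continuous B -> (forall b, continuous (F b)) -> (forall b, continuous (G b)) ->
  Ia a (fun y => A y - B y + \sum_b c b * (F b y - G b y)) =
  Ia a A - Ia a B + \sum_b c b * (Ia a (F b) - Ia a (G b)).
Proof.
move=> cA cB cF cG.
rewrite IaD; first last.
- by apply: cont_sumn => b; apply: contZ; apply: contB.
- exact: contB.
rewrite IaB // (Ia_sum _ _ (F := fun b y => c b * (F b y - G b y))); last first.
  by move=> b; apply: contZ; apply: contB.
by congr (_ + _); apply: eq_bigr => b _; rewrite IaZ ?IaB //; apply: contB.
Qed.

Lemma P_id (lam mu : R) f y : 0 < lam -> 0 < mu -> continuous f ->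
  (mu - lam) * Rdu S Res lam (Rco M S Res phi p mu f) y =
  Rdu S Res lam f y - Rdu S Res mu f y + \sum_b U f mu b 0 * (E b lam y - E b mu y).
Proof.
move=> l0 m0 cf; rewrite Rco_fun Rdu_comb //; first last.
- by move=> b; exact: E_cont.
- exact: Rdu_cont.
rewrite mulrDr -Rdu_hil // mulr_sumr; congr (_ + _); apply: eq_bigr => b _.
by rewrite mulrCA -ell_hil //; exact: (valP (enum_val b)).
Qed.

Lemma Uvec_entry (v w : 'cV[R]_n) (c : R) b : (v + c *: w) b 0 = v b 0 + c * w b 0.
Proof. by rewrite !mxE. Qed.

Lemma U_hil (lam mu : R) f : 0 < lam -> 0 < mu -> continuous f ->
  U f lam = U f mu + (mu - lam) *: U (Rco M S Res phi p mu f) lam.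
Proof.
move=> l0 m0 cf; set g := Rco M S Res phi p mu f.
have cg : continuous g by exact: Rco_cont.
rewrite {1}/U; symmetry.
apply: (mx_uniq (fun a b => Nmx_ge0 a b l0) (fun a => Nmx_row_lt1 a l0)) => a.
rewrite Uvec_entry; under eq_bigr => b _ do rewrite Uvec_entry NmxE.
rewrite bvecE (U_sol f a m0) (U_sol g a l0).
have key : (mu - lam) * Ia a (Rdu S Res lam g) =
  Ia a (Rdu S Res lam f) - Ia a (Rdu S Res mu f) +
  \sum_b U f mu b 0 * (Ia a (E b lam) - Ia a (E b mu)).
  rewrite -IaZ; last exact: Rdu_cont.
  rewrite (Ia_ext _ (g := fun y => Rdu S Res lam f y - Rdu S Res mu f y +
     \sum_b U f mu b 0 * (E b lam y - E b mu y))); last by move=> y; rewrite P_id.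
  rewrite Ia_comb //; try exact: Rdu_cont.
  - by move=> b; exact: E_cont.
  - by move=> b; exact: E_cont.
rewrite mulrDr key.
have e1 : \sum_b U f mu b 0 * (Ia a (E b lam) - Ia a (E b mu)) =
  \sum_b Ia a (E b lam) * U f mu b 0 - \sum_b Ia a (E b mu) * U f mu b 0.
  by rewrite -sumrB; apply: eq_bigr => b _; rewrite mulrBr !(mulrC (U f mu b 0)).
have e2 : \sum_b Ia a (E b lam) * (U f mu b 0 + (mu - lam) * U g lam b 0) =
  \sum_b Ia a (E b lam) * U f mu b 0 + (mu - lam) * \sum_b Ia a (E b lam) * U g lam b 0.
  by rewrite mulr_sumr -big_split; apply: eq_bigr => b _; rewrite mulrDr mulrCA.
rewrite e1 e2; ring.
Qed.

Lemma Rco_hil (lam mu : R) f x : 0 < lam -> 0 < mu -> continuous f ->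
  Rco M S Res phi p lam f x - Rco M S Res phi p mu f x =
  (mu - lam) * Rco M S Res phi p lam (Rco M S Res phi p mu f) x.
Proof.
move=> l0 m0 cf.
rewrite (RcoE lam (Rco M S Res phi p mu f) x) (RcoE lam f x) (RcoE mu f x) mulrDr P_id //.
set g := Rco M S Res phi p mu f.
rewrite (U_hil l0 m0 cf) -/g; under eq_bigr => a _ do rewrite Uvec_entry.
have e1 : \sum_a (U f mu a 0 + (mu - lam) * U g lam a 0) * E a lam x =
  \sum_a U f mu a 0 * E a lam x + (mu - lam) * \sum_a U g lam a 0 * E a lam x.
  by rewrite mulr_sumr -big_split /=; apply: eq_bigr => a _; rewrite mulrDl -mulrA.
have e2 : \sum_b U f mu b 0 * (E b lam x - E b mu x) =
  \sum_b U f mu b 0 * E b lam x - \sum_b U f mu b 0 * E b mu x.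
  by rewrite -sumrB; apply: eq_bigr => b _; rewrite mulrBr.
rewrite e1 e2; ring.
Qed.


Lemma Uvec_entry2 (v w : 'cV[R]_n) (c : R) b : (c *: v + w) b 0 = c * v b 0 + w b 0.
Proof. by rewrite !mxE. Qed.

Lemma bvec_lin (lam c : R) f g : 0 < lam -> continuous f -> continuous g ->
  bvec M S Res p (fun y => c * f y + g y) lam =
  c *: bvec M S Res p f lam + bvec M S Res p g lam.
Proof.
move=> l0 cf cg; apply/colP => a; rewrite Uvec_entry2 !bvecE.
rewrite (Ia_ext _ (g := fun y => c * Rdu S Res lam f y + Rdu S Res lam g y)); last first.
  by move=> y; rewrite Rdu_lin.
rewrite IaD ?IaZ //; try exact: Rdu_cont.
by apply: contZ; exact: Rdu_cont.
Qed.

Lemma U_lin (lam c : R) f g : 0 < lam -> continuous f -> continuous g ->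
  U (fun y => c * f y + g y) lam = c *: U f lam + U g lam.
Proof. by move=> l0 cf cg; rewrite /U bvec_lin // mulmxDr scalemxAr. Qed.

Lemma Rco_lin (lam c : R) f g x : 0 < lam -> continuous f -> continuous g ->
  Rco M S Res phi p lam (fun y => c * f y + g y) x =
  c * Rco M S Res phi p lam f x + Rco M S Res phi p lam g x.
Proof.
move=> l0 cf cg; rewrite !RcoE Rdu_lin // U_lin //.
under eq_bigr => a _ do rewrite Uvec_entry2.
have e : \sum_(a : 'I_n) (c * U f lam a 0 + U g lam a 0) * E a lam x =
   c * \sum_(a : 'I_n) U f lam a 0 * E a lam x + \sum_(a : 'I_n) U g lam a 0 * E a lam x.
  by rewrite mulr_sumr -big_split /=; apply: eq_bigr => a _; rewrite mulrDl -mulrA.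
rewrite e; ring.
Qed.

Lemma Nrow_ge0 (lam : R) : 0 < lam -> forall a b, 0 <= Ia a (E b lam).
Proof. by move=> l0 a b; rewrite -NmxE; exact: Nmx_ge0. Qed.

Lemma Nrow_lt1 (lam : R) : 0 < lam -> forall a, \sum_(b : 'I_n) Ia a (E b lam) < 1.
Proof.
move=> l0 a; have := Nmx_row_lt1 a l0.
by under eq_bigr => b _ do rewrite NmxE.
Qed.

Lemma U_solF f (lam : R) : 0 < lam -> forall a,
  U f lam a 0 = Ia a (Rdu S Res lam f) + \sum_(b : 'I_n) Ia a (E b lam) * U f lam b 0.
Proof. by move=> l0 a; exact: U_sol. Qed.

Lemma Rdu_ge0 (lam : R) f x : 0 < lam -> continuous f -> (forall y, 0 <= f y) ->
  0 <= Rdu S Res lam f x.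
Proof.
move=> l0 cf f0; have [k Sk] := S_ex x; rewrite (Rdu_at _ l0 Sk).
apply: R_pos => //; try exact: cin_cont.
Qed.

Lemma NIE (lam : R) a b : (\matrix_(a, b) Ia a (E b lam)) a b = Ia a (E b lam).
Proof. by rewrite mxE. Qed.

Lemma U_ge0 f (lam : R) : 0 < lam -> continuous f -> (forall y, 0 <= f y) ->
  forall a, 0 <= U f lam a 0.
Proof.
move=> l0 cf f0.
apply: (@mx_posF _ _ (\matrix_(a, b) Ia a (E b lam)) _ _ (fun a => U f lam a 0)
   (fun a => Ia a (Rdu S Res lam f))).
- by move=> a b; rewrite NIE; exact: Nrow_ge0.
- by move=> a; under eq_bigr => b _ do rewrite NIE; exact: Nrow_lt1.
- by move=> a; rewrite U_solF //; congr (_ + _); apply: eq_bigr => b _; rewrite NIE.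
- by move=> a; apply: Ia_ge0 => y; exact: Rdu_ge0.
Qed.

Lemma Rco_ge0 (lam : R) f x : 0 < lam -> continuous f -> (forall y, 0 <= f y) ->
  0 <= Rco M S Res phi p lam f x.
Proof.
move=> l0 cf f0; rewrite RcoE; apply: addr_ge0; first exact: Rdu_ge0.
by apply: sumr_ge0 => a _; apply: mulr_ge0; [exact: U_ge0|exact: E_ge0].
Qed.

Definition h1 (lam : R) x := lam * Rdu S Res lam (fun _ => 1) x + D lam x.

Lemma h1_le1 (lam : R) x : 0 < lam -> h1 lam x <= 1.
Proof.
move=> l0; have [k Sk] := S_ex x; rewrite /h1 (Rdu_at _ l0 Sk) (DE l0 Sk).
case: ifP => _; first lra.
by rewrite addr0; exact: R_sub1.
Qed.

Lemma h1_cont (lam : R) : 0 < lam -> continuous (h1 lam).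
Proof.
move=> l0; apply: contD; last exact: D_cont.
by apply: contZ; apply: Rdu_cont => //; exact: cst_continuous.
Qed.

Lemma Ia_h1 a (lam : R) : 0 < lam ->
  Ia a (h1 lam) = lam * Ia a (Rdu S Res lam (fun _ => 1)) + \sum_(b : 'I_n) Ia a (E b lam).
Proof.
move=> l0; have cR : continuous (Rdu S Res lam (fun _ => 1)).
  by apply: Rdu_cont => //; exact: cst_continuous.
rewrite /h1 IaD; [|exact: contZ|exact: D_cont].
rewrite IaZ // /D (Ia_sum _ _ (F := fun b x => E b lam x)) //.
by move=> b; exact: (E_cont l0).
Qed.

Lemma lamU_sol (lam : R) : 0 < lam -> forall a,
  1 - lam * U (fun _ => 1) lam a 0 =
  (1 - Ia a (h1 lam)) + \sum_(b : 'I_n) Ia a (E b lam) * (1 - lam * U (fun _ => 1) lam b 0).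
Proof.
move=> l0 a; rewrite Ia_h1 // U_solF //.
have e : \sum_(b : 'I_n) Ia a (E b lam) * (1 - lam * U (fun=> 1) lam b 0) =
  \sum_(b : 'I_n) Ia a (E b lam) - lam * \sum_(b : 'I_n) Ia a (E b lam) * U (fun=> 1) lam b 0.
  rewrite mulr_sumr -sumrB; apply: eq_bigr => b _; rewrite mulrBr mulr1 mulrCA //.
rewrite e; ring.
Qed.

Lemma lamU_le1 (lam : R) : 0 < lam -> forall a, lam * U (fun _ => 1) lam a 0 <= 1.
Proof.
move=> l0 a; rewrite -subr_ge0.
apply: (@mx_posF _ _ (\matrix_(a, b) Ia a (E b lam)) _ _
   (fun a => 1 - lam * U (fun _ => 1) lam a 0) (fun a => 1 - Ia a (h1 lam))).
- by move=> c b; rewrite NIE; exact: Nrow_ge0.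
- by move=> c; under eq_bigr => b _ do rewrite NIE; exact: Nrow_lt1.
- by move=> c; rewrite lamU_sol //; congr (_ + _); apply: eq_bigr => b _; rewrite NIE.
- move=> c; rewrite subr_ge0; apply: le_trans (Pa_le1 c); rewrite -[Pa c]mul1r -Ia_cst.
  apply: Ia_mono; [exact: h1_cont|exact: cst_continuous|move=> y; exact: h1_le1].
Qed.

Lemma lamRco1 (lam : R) x : 0 < lam -> lam * Rco M S Res phi p lam (fun _ => 1) x =
  lam * Rdu S Res lam (fun _ => 1) x + \sum_(a : 'I_n) (lam * U (fun _ => 1) lam a 0) * E a lam x.
Proof.
by move=> l0; rewrite RcoE mulrDr; congr (_ + _); rewrite mulr_sumr; apply: eq_bigr => a _; rewrite mulrA.
Qed.

Lemma Rco_sub (lam : R) x : 0 < lam -> lam * Rco M S Res phi p lam (fun _ => 1) x <= 1.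
Proof.
move=> l0; rewrite lamRco1 //; apply: le_trans (h1_le1 x l0); rewrite /h1 lerD2l /D.
apply: ler_sum => a _; rewrite -[X in _ <= X]mul1r; apply: ler_wpM2r.
  exact: E_ge0.
exact: lamU_le1.
Qed.

Section Conservative.
Hypothesis Hprob : forall (i : 'I_N) (j : 'I_(kappa i)), (i < M)%N -> p i j [set: T] = 1%E.

Lemma Pa1 a : Pa a = 1.
Proof. by rewrite /Pa Hprob //; exact: (valP (enum_val a)). Qed.

Lemma h1_eq1 (lam : R) x : 0 < lam -> h1 lam x = 1.
Proof.
move=> l0; have [k Sk] := S_ex x; rewrite /h1 (Rdu_at _ l0 Sk) (DE l0 Sk).
case: ifPn => kM; first ring.
by rewrite addr0 Hcons // leqNgt.
Qed.

Lemma lamU_eq1 (lam : R) : 0 < lam -> forall a, lam * U (fun _ => 1) lam a 0 = 1.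
Proof.
move=> l0 a; apply/eqP; rewrite eq_sym -subr_eq0; apply/eqP.
apply: (@mx_zeroF _ _ (\matrix_(a, b) Ia a (E b lam)) _ _
   (fun a => 1 - lam * U (fun _ => 1) lam a 0)).
- by move=> c b; rewrite NIE; exact: Nrow_ge0.
- by move=> c; under eq_bigr => b _ do rewrite NIE; exact: Nrow_lt1.
- move=> c; rewrite lamU_sol //.
  rewrite (Ia_ext _ (g := fun _ => 1)); last by move=> y; exact: h1_eq1.
  rewrite Ia_cst Pa1 mul1r subrr add0r.
  by apply: eq_bigr => b _; rewrite NIE.
Qed.

Lemma Rco_cons (lam : R) x : 0 < lam -> lam * Rco M S Res phi p lam (fun _ => 1) x = 1.
Proof.
move=> l0; rewrite lamRco1 //.
under eq_bigr => a _ do rewrite lamU_eq1 // mul1r.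
by have := h1_eq1 x l0; rewrite /h1 /D.
Qed.

End Conservative.


Lemma sum_ge_single (F : 'I_N -> R) k : (forall i, 0 <= F i) -> F k <= \sum_i F i.
Proof. by move=> F0; rewrite (bigD1 k) //= lerDl sumr_ge0. Qed.

Lemma Rco_conv f : continuous f -> forall eps : R, 0 < eps -> exists L : R,
  forall lam : R, L < lam -> forall x, `|lam * Rco M S Res phi p lam f x - f x| < eps.
Proof.
move=> cf eps e0.
have [B HB] := cont_bounded cT cf.
have B0 : 0 <= B := le_trans (normr_ge0 _) (HB point).
set q := eps / (4 * (B + 1)).
have q0 : 0 < q by rewrite divr_gt0 // mulr_gt0 // ltr_pwDr.
have hq : q * (4 * (B + 1)) = eps.
  by rewrite /q mulfVK // mulf_neq0 // gt_eqF // ltr_pwDr.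
set d := Order.min (1/2 : R) q.
have d0 : 0 < d by rewrite /d lt_min q0 andbT divr_gt0.
have d12 : d <= 1/2 by rewrite /d ge_min lexx.
have dq : d <= q by rewrite /d ge_min lexx orbT.
have e2 : 0 < eps / 2 by rewrite divr_gt0.
have h1 : forall k, exists L : R, forall lam : R, L < lam -> forall x, S k x ->
    `|lam * Res k lam f x - f x| < eps / 2.
  by move=> k; apply: R_conv e2; exact: cin_cont.
have h2 : forall k, exists L : R, forall lam : R, L < lam -> forall x, S k x ->
    `|lam * Res k lam (fun _ => 1) x - 1| < d.
  by move=> k; apply: R_conv d0; exact: cinC.
have [L1 HL1] := choice h1; have [L2 HL2] := choice h2.
exists (1 + \sum_k (`|L1 k| + `|L2 k|)) => lam hl x.
have s0 : 0 <= \sum_k (`|L1 k| + `|L2 k|) by apply: sumr_ge0 => k _; rewrite addr_ge0.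
have Lk : forall k, L1 k < lam /\ L2 k < lam.
  move=> k; have := @sum_ge_single (fun k => `|L1 k| + `|L2 k|) k.
  move=> /(_ (fun i => addr_ge0 (normr_ge0 _) (normr_ge0 _))) /= hk.
  have := ler_norm (L1 k); have := ler_norm (L2 k).
  have := normr_ge0 (L1 k); have := normr_ge0 (L2 k); split; lra.
have l0 : 0 < lam by lra.
have Dd : forall y, D lam y <= d.
  move=> y; have [k Sk] := S_ex y; rewrite (DE l0 Sk).
  case: ifP => _; last exact: ltW.
  have := HL2 k lam (Lk k).2 y Sk; rewrite distrC => h.
  exact: le_trans (ler_norm _) (ltW h).
have row : forall a, \sum_(b : 'I_n) Ia a (E b lam) <= 1/2.
  move=> a; rewrite -(Ia_sum _ _ (F := fun b x => E b lam x)); last first.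
    by move=> b; exact: (E_cont l0).
  apply: le_trans (_ : Ia a (fun _ => 1/2) <= _).
    apply: Ia_mono; [exact: D_cont|exact: cst_continuous|].
    by move=> y; exact: le_trans (Dd y) d12.
  by rewrite Ia_cst; have := Pa_le1 a; have := Pa_ge0 a; nra.
have hc : forall a, `|Ia a (Rdu S Res lam f)| <= lam^-1 * B.
  move=> a; apply: Ia_abs; first exact: Rdu_cont.
  move=> y. have [k Sk] := S_ex y; rewrite (Rdu_at _ l0 Sk).
  have hb := R_bound l0 (@cin_cont (S k) f cf) (fun z _ => HB z) Sk.
  have il0 : 0 <= lam^-1 by rewrite invr_ge0 ltW.
  rewrite -(mulKf (lt0r_neq0 l0) (Res k lam f y)) normrM (ger0_norm il0).
  by rewrite ler_pM2l ?invr_gt0.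
have N0' : forall c b, 0 <= (\matrix_(a, b) Ia a (E b lam)) c b.
  by move=> c b; rewrite NIE; exact: Nrow_ge0.
have hr : forall c, \sum_(b : 'I_n) (\matrix_(a, b) Ia a (E b lam)) c b <= 1/2.
  by move=> c; under eq_bigr => b _ do rewrite NIE; exact: row.
have hv : forall c, U f lam c 0 = Ia c (Rdu S Res lam f) +
    \sum_(b : 'I_n) (\matrix_(a, b) Ia a (E b lam)) c b * U f lam b 0.
  by move=> c; rewrite U_solF //; congr (_ + _); apply: eq_bigr => b _; rewrite NIE.
have bnd : forall a, `|lam * U f lam a 0| <= 2 * B.
  move=> a.
  have := @mx_boundF _ _ _ N0' (fun a => U f lam a 0) (fun a => Ia a (Rdu S Res lam f))
     (1/2) (lam^-1 * B) hr hv hc a.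
  have li : lam * lam^-1 = 1 by rewrite mulfV // gt_eqF.
  rewrite normrM (ger0_norm (ltW l0)).
  move: (`|U f lam a 0|) (lam^-1) li (normr_ge0 (U f lam a 0)) => v il li v0 h.
  nra.
have [k Sk] := S_ex x.
rewrite RcoE mulrDr (Rdu_at _ l0 Sk).
have ek : `|lam * Res k lam f x - f x| < eps / 2 := HL1 k lam (Lk k).1 x Sk.
have sk : `|lam * \sum_(a < n) U f lam a 0 * E a lam x| <= 2 * B * d.
  rewrite mulr_sumr; apply: le_trans (ler_norm_sum _ _ _) _.
  apply: le_trans (_ : \sum_(a < n) 2 * B * E a lam x <= _).
    apply: ler_sum => a _; rewrite mulrA normrM (ger0_norm (E_ge0 _ _ l0)).
    by apply: ler_wpM2r; [exact: E_ge0|exact: bnd].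
  rewrite -mulr_sumr; apply: ler_wpM2l; first by rewrite mulr_ge0.
  exact: Dd.
have : 2 * B * d <= 2 * B * q by apply: ler_wpM2l => //; rewrite mulr_ge0.
move: ek sk; rewrite addrAC; move: (lam * Res k lam f x - f x) (lam * _) => A C ek sk hBq.
apply: le_lt_trans (ler_normD _ _) _.
have : 2 * B * q < eps / 2 by nra.
lra.
Qed.


Lemma wT_cont (f : T -> R) : {within [set: T], continuous f} -> continuous f.
Proof. by move=> h; exact: (proj2 (continuous_subspace_setT f) h). Qed.

Lemma cont_wT (f : T -> R) : continuous f -> {within [set: T], continuous f}.
Proof. by move=> h; exact: (proj1 (continuous_subspace_setT f) h). Qed.

Lemma main_result : feller_resolvent [set: T] (Rco M S Res phi p) /\
  ((forall (i : 'I_N) (j : 'I_(kappa i)), (i < M)%N -> p i j [set: T] = 1%E) ->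
   conservative [set: T] (Rco M S Res phi p)).
Proof.
split; last by move=> Hprob lam l0 x _; apply: Rco_cons.
split.
  by move=> lam f g l0 fg x _; have -> // : f = g by apply: funext => y; exact: fg.
split.
  move=> lam f l0 /wT_cont cf; apply: cont_wT; exact: Rco_cont.
split.
  move=> lam a f g l0 /wT_cont cf /wT_cont cg x _.
  exact: Rco_lin.
split.
  move=> lam mu f l0 m0 /wT_cont cf x _; exact: Rco_hil.
split.
  move=> f /wT_cont cf eps e0; have [L HL] := Rco_conv cf e0.
  by exists L => lam hl x _; exact: HL.
split.
  move=> lam f l0 /wT_cont cf f0 x _; apply: Rco_ge0 => // y.
  exact: f0.
by move=> lam l0 x _; exact: Rco_sub.
Qed.

End Main.

Theorem theorem5 (R : realType) (T : pseudoPMetricType R)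
  (N M : nat) (S : 'I_N -> set T)
  (Res : 'I_N -> R -> (T -> R) -> T -> R)
  (kappa : 'I_N -> nat) (phi : forall i : 'I_N, 'I_(kappa i) -> T -> R)
  (p : forall i : 'I_N, 'I_(kappa i) -> {measure set (Borel T) -> \bar R}) :
  hausdorff_space T -> compact [set: T] ->
  (forall i j : 'I_N, i != j -> S i `&` S j = set0) ->
  (\bigcup_(i in [set: 'I_N]) S i = [set: T]) ->
  (forall i, open (S i)) ->
  (1 <= M <= N)%N ->
  (forall i, feller_resolvent (S i) (Res i)) ->
  (forall i : 'I_N, (i < M)%N -> ~ conservative (S i) (Res i)) ->
  (forall i : 'I_N, (M <= i)%N -> conservative (S i) (Res i)) ->
  (forall i : 'I_N, (i < M)%N -> trivial_kernel (S i) (Res i)) ->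
  (forall (i : 'I_N) (j : 'I_(kappa i)), (i < M)%N ->
     [/\ {within S i, continuous phi i j},
         (forall x, S i x -> 0 <= phi i j x <= 1),
         (forall lam : R, 0 < lam -> forall x, S i x ->
            lam * Res i lam (phi i j) x <= phi i j x) &
         (forall lam : R, 0 < lam -> exists2 x, S i x &
            lam * Res i lam (phi i j) x != phi i j x)]) ->
  (forall i : 'I_N, (i < M)%N ->
     forall x, S i x -> \sum_(j < kappa i) phi i j x = 1) ->
  (forall (i : 'I_N) (j : 'I_(kappa i)), (i < M)%N -> (p i j [set: T] <= 1)%E) ->
  feller_resolvent [set: T] (Rco M S Res phi p) /\
  ((forall (i : 'I_N) (j : 'I_(kappa i)), (i < M)%N -> p i j [set: T] = 1%E) ->
   conservative [set: T] (Rco M S Res phi p)).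
Proof.
move=> _ cT Sdisj Scov Sopen _ HF _ Hcons _ Hphi Hsum Hsub.
exact: (main_result cT Sdisj Scov Sopen HF Hcons Hphi Hsum Hsub).
Qed.
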